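(* Let $A$ (in $\mathcal H$) and $B$ (in $\mathcal K$) be closed densely defined operators with $A\dashv B$ via a bounded intertwining operator $T$. Assume that $T^{-1}$ is everywhere defined and bounded and that $TD(A)$ is a core for $B$. Then $\sigma_p(A)\subseteq\sigma_p(B)\subseteq\sigma(B)\subseteq\sigma(A)$.
   Context: A bounded operator $T:\mathcal H\to\mathcal K$ is a bounded intertwining operator for $A$ and $B$ if $T D(A)\subseteq D(B)$ and $BT\xi=TA\xi$ for all $\xi\in D(A)$. $A\dashv B$ (quasi-similarity) means there is a bounded intertwining operator $T$ for $A$ and $B$ that is injective with densely defined inverse $T^{-1}$. $\sigma(A)$ is the spectrum (complement of the set of $\lambda$ for which $(A-\lambda I)^{-1}$ exists as a bounded everywhere defined operator) and $\sigma_p(A)$ the set of eigenvalues. *)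

(* Defs.v *)
From Stdlib Require Import Reals.
Open Scope R_scope.

Record C := mkC { Re : R; Im : R }.
Definition C0 : C := mkC 0 0.
Definition C1 : C := mkC 1 0.
Definition Cadd (a b : C) : C := mkC (Re a + Re b) (Im a + Im b).
Definition Copp (a : C) : C := mkC (- Re a) (- Im a).
Definition Cmul (a b : C) : C :=
  mkC (Re a * Re b - Im a * Im b) (Re a * Im b + Im a * Re b).
Definition Cconj (a : C) : C := mkC (Re a) (- Im a).

Record Hilbert := {
  carrier :> Type;
  hzero : carrier;
  hadd : carrier -> carrier -> carrier;
  hopp : carrier -> carrier;
  hscal : C -> carrier -> carrier;
  inner : carrier -> carrier -> C;
  hadd_assoc : forall x y z, hadd x (hadd y z) = hadd (hadd x y) z;
  hadd_comm : forall x y, hadd x y = hadd y x;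
  hadd_0 : forall x, hadd x hzero = x;
  hadd_opp : forall x, hadd x (hopp x) = hzero;
  hscal_1 : forall x, hscal C1 x = x;
  hscal_mul : forall a b x, hscal a (hscal b x) = hscal (Cmul a b) x;
  hscal_distr_v : forall a x y, hscal a (hadd x y) = hadd (hscal a x) (hscal a y);
  hscal_distr_s : forall a b x, hscal (Cadd a b) x = hadd (hscal a x) (hscal b x);
  inner_add_l : forall x y z, inner (hadd x y) z = Cadd (inner x z) (inner y z);
  inner_scal_l : forall a x y, inner (hscal a x) y = Cmul a (inner x y);
  inner_sym : forall x y, inner y x = Cconj (inner x y);
  inner_pos : forall x, Im (inner x x) = 0 /\ 0 <= Re (inner x x);
  inner_def : forall x, inner x x = C0 -> x = hzero;
  complete : forall u : nat -> carrier,
    (forall eps, eps > 0 -> exists N, forall m n, (N <= m)%nat -> (N <= n)%nat ->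
        sqrt (Re (inner (hadd (u m) (hopp (u n))) (hadd (u m) (hopp (u n))))) < eps) ->
    exists x, forall eps, eps > 0 -> exists N, forall n, (N <= n)%nat ->
        sqrt (Re (inner (hadd (u n) (hopp x)) (hadd (u n) (hopp x)))) < eps
}.

Arguments hzero {h}.
Arguments hadd {h}.
Arguments hopp {h}.
Arguments hscal {h}.
Arguments inner {h}.

Definition hsub {H : Hilbert} (x y : H) : H := hadd x (hopp y).
Definition hnorm {H : Hilbert} (x : H) : R := sqrt (Re (inner x x)).

Definition converges {H : Hilbert} (u : nat -> H) (x : H) : Prop :=
  forall eps, eps > 0 -> exists N, forall n, (N <= n)%nat -> hnorm (hsub (u n) x) < eps.

(** * (Possibly unbounded) linear operators H -> K: a domain and an action on it *)
Record Op (H K : Hilbert) := mkOp { dom : H -> Prop; app : H -> K }.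
Arguments dom {H K}.
Arguments app {H K}.

Definition linear_op {H K : Hilbert} (A : Op H K) : Prop :=
  dom A hzero /\
  (forall x y, dom A x -> dom A y -> dom A (hadd x y)) /\
  (forall a x, dom A x -> dom A (hscal a x)) /\
  (forall x y, dom A x -> dom A y -> app A (hadd x y) = hadd (app A x) (app A y)) /\
  (forall a x, dom A x -> app A (hscal a x) = hscal a (app A x)).

Definition densely_defined {H K : Hilbert} (A : Op H K) : Prop :=
  forall x : H, exists u : nat -> H, (forall n, dom A (u n)) /\ converges u x.

Definition closed_op {H K : Hilbert} (A : Op H K) : Prop :=
  forall (u : nat -> H) (x : H) (y : K),
    (forall n, dom A (u n)) -> converges u x -> converges (fun n => app A (u n)) y ->
    dom A x /\ app A x = y.

Definition closed_densely_defined {H K : Hilbert} (A : Op H K) : Prop :=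
  linear_op A /\ densely_defined A /\ closed_op A.

Definition bounded {H K : Hilbert} (T : H -> K) : Prop :=
  (forall x y, T (hadd x y) = hadd (T x) (T y)) /\
  (forall a x, T (hscal a x) = hscal a (T x)) /\
  exists M, forall x, hnorm (T x) <= M * hnorm x.

Definition intertwining {H K : Hilbert} (A : Op H H) (B : Op K K) (T : H -> K) : Prop :=
  bounded T /\
  forall xi, dom A xi -> dom B (T xi) /\ app B (T xi) = T (app A xi).

(** A ⊣ B via T: T bounded intertwining, injective, with densely defined inverse
    (the domain of T^{-1} is the range of T) *)
Definition quasi_similar_via {H K : Hilbert} (A : Op H H) (B : Op K K) (T : H -> K) : Prop :=
  intertwining A B T /\
  (forall x y, T x = T y -> x = y) /\
  (forall y : K, exists u : nat -> K, (forall n, exists x, T x = u n) /\ converges u y).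

Definition inverse_everywhere_bounded {H K : Hilbert} (T : H -> K) : Prop :=
  (forall y : K, exists x : H, T x = y) /\
  exists M, forall x : H, hnorm x <= M * hnorm (T x).

(** D is a core for the closed operator B: D ⊆ D(B) and the graph of B
    restricted to D is dense in the graph of B (closure of B|D equals B) *)
Definition core {K : Hilbert} (D : K -> Prop) (B : Op K K) : Prop :=
  (forall y, D y -> dom B y) /\
  forall y, dom B y -> exists u : nat -> K,
    (forall n, D (u n)) /\ converges u y /\ converges (fun n => app B (u n)) (app B y).

Definition image_dom {H K : Hilbert} (T : H -> K) (A : Op H H) : K -> Prop :=
  fun y => exists xi, dom A xi /\ T xi = y.

Definition shift_app {H : Hilbert} (A : Op H H) (lam : C) (x : H) : H :=
  hsub (app A x) (hscal lam x).

Definition resolvent {H : Hilbert} (A : Op H H) (lam : C) : Prop :=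
  exists Rl : H -> H, bounded Rl /\
    (forall y, dom A (Rl y) /\ shift_app A lam (Rl y) = y) /\
    (forall x, dom A x -> Rl (shift_app A lam x) = x).

Definition spectrum {H : Hilbert} (A : Op H H) (lam : C) : Prop := ~ resolvent A lam.

Definition point_spectrum {H : Hilbert} (A : Op H H) (lam : C) : Prop :=
  exists x, dom A x /\ x <> hzero /\ app A x = hscal lam x.

(* Main.v *)
Require Import Defs.
From Stdlib Require Import Reals Lra Psatz ClassicalEpsilon.
Open Scope R_scope.

Lemma add0l {H : Hilbert} (x : H) : hadd hzero x = x.
Proof. rewrite hadd_comm. apply hadd_0. Qed.
Lemma addNl {H : Hilbert} (x : H) : hadd (hopp x) x = hzero.
Proof. rewrite hadd_comm. apply hadd_opp. Qed.
Lemma add_cancel_l {H : Hilbert} (a b c : H) : hadd a b = hadd a c -> b = c.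
Proof. intro E. rewrite <- (add0l b), <- (add0l c), <- (addNl a), <- !hadd_assoc, E. reflexivity. Qed.
Lemma opp_unique {H : Hilbert} (a b : H) : hadd a b = hzero -> b = hopp a.
Proof. intro E. apply (add_cancel_l a). rewrite E, hadd_opp. reflexivity. Qed.
Lemma oppK {H : Hilbert} (a : H) : hopp (hopp a) = a.
Proof. symmetry. apply opp_unique. apply addNl. Qed.
Lemma swap_mid {H : Hilbert} (a b c d : H) :
  hadd (hadd a b) (hadd c d) = hadd (hadd a c) (hadd b d).
Proof. rewrite <- !hadd_assoc. f_equal. rewrite !hadd_assoc, (hadd_comm _ b c). reflexivity. Qed.
Lemma oppD {H : Hilbert} (a b : H) : hopp (hadd a b) = hadd (hopp a) (hopp b).
Proof. symmetry. apply opp_unique. rewrite swap_mid, !hadd_opp, hadd_0. reflexivity. Qed.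
Lemma sub_eq0 {H : Hilbert} (a b : H) : hsub a b = hzero -> a = b.
Proof. unfold hsub. intro E. apply opp_unique in E. rewrite <- (oppK a), <- E, oppK. reflexivity. Qed.
Lemma sub_sub {H : Hilbert} (a b c d : H) :
  hsub (hsub a b) (hsub c d) = hsub (hsub a c) (hsub b d).
Proof. unfold hsub. rewrite !oppD, !oppK. apply swap_mid. Qed.
Lemma sub_add {H : Hilbert} (a b : H) : a = hadd (hsub a b) b.
Proof. unfold hsub. rewrite <- hadd_assoc, addNl, hadd_0. reflexivity. Qed.
Lemma scal0 {H : Hilbert} a : hscal a (@hzero H) = hzero.
Proof. apply (add_cancel_l (hscal a hzero)). rewrite <- hscal_distr_v, !hadd_0. reflexivity. Qed.
Lemma scalN {H : Hilbert} a (x : H) : hscal a (hopp x) = hopp (hscal a x).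
Proof. apply opp_unique. rewrite <- hscal_distr_v, hadd_opp. apply scal0. Qed.
Lemma scal_sub {H : Hilbert} a (x y : H) : hscal a (hsub x y) = hsub (hscal a x) (hscal a y).
Proof. unfold hsub. rewrite hscal_distr_v, scalN. reflexivity. Qed.
Lemma scalC0 {H : Hilbert} (x : H) : hscal Defs.C0 x = hzero.
Proof. apply (add_cancel_l (hscal Defs.C0 x)). rewrite <- hscal_distr_s, hadd_0. f_equal.
  unfold Cadd, Defs.C0; simpl; f_equal; ring. Qed.
Lemma scal_m1 {H : Hilbert} (x : H) : hscal (mkC (-1) 0) x = hopp x.
Proof. apply opp_unique. rewrite <- (hscal_1 _ x) at 1. rewrite <- hscal_distr_s.
  replace (Cadd Defs.C1 (mkC (-1) 0)) with Defs.C0 by (unfold Cadd, Defs.C1, Defs.C0; simpl; f_equal; ring).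
  apply scalC0. Qed.

Lemma map_sub {H K : Hilbert} (P : H -> Prop) (f : H -> K) :
  P hzero -> (forall x y, P x -> P y -> P (hadd x y)) -> (forall x, P x -> P (hopp x)) ->
  (forall x y, P x -> P y -> f (hadd x y) = hadd (f x) (f y)) ->
  forall a b, P a -> P b -> f (hsub a b) = hsub (f a) (f b).
Proof.
  intros P0 PA PO Hf a b Pa Pb. unfold hsub. rewrite Hf by auto. f_equal.
  apply opp_unique. rewrite <- Hf by auto. rewrite hadd_opp.
  apply (add_cancel_l (f hzero)). rewrite <- Hf by auto. rewrite !hadd_0. reflexivity.
Qed.

Lemma map0 {H K : Hilbert} (f : H -> K) :
  (forall x y, f (hadd x y) = hadd (f x) (f y)) -> f hzero = hzero.
Proof. intro Hf. apply (add_cancel_l (f hzero)). rewrite <- Hf, !hadd_0. reflexivity. Qed.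

Lemma Re_sym {H : Hilbert} (x y : H) : Re (inner x y) = Re (inner y x).
Proof. rewrite (inner_sym _ x y). reflexivity. Qed.
Lemma Re_add_l {H : Hilbert} (x y z : H) : Re (inner (hadd x y) z) = Re (inner x z) + Re (inner y z).
Proof. rewrite inner_add_l. reflexivity. Qed.
Lemma Re_add_r {H : Hilbert} (x y z : H) : Re (inner x (hadd y z)) = Re (inner x y) + Re (inner x z).
Proof. rewrite (Re_sym x (hadd y z)), Re_add_l, (Re_sym y x), (Re_sym z x). reflexivity. Qed.
Lemma Re_scal_l {H : Hilbert} s (x y : H) : Re (inner (hscal (mkC s 0) x) y) = s * Re (inner x y).
Proof. rewrite inner_scal_l. unfold Cmul; simpl; ring. Qed.
Lemma Re_scal_r {H : Hilbert} s (x y : H) : Re (inner x (hscal (mkC s 0) y)) = s * Re (inner x y).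
Proof. rewrite Re_sym, Re_scal_l, Re_sym. reflexivity. Qed.
Lemma Re_zero_l {H : Hilbert} (y : H) : Re (inner hzero y) = 0.
Proof. assert (E := Re_add_l (@hzero H) hzero y). rewrite hadd_0 in E. lra. Qed.

Lemma hnorm_pos {H : Hilbert} (x : H) : 0 <= hnorm x.
Proof. apply sqrt_pos. Qed.
Lemma hnorm_sq {H : Hilbert} (x : H) : hnorm x * hnorm x = Re (inner x x).
Proof. unfold hnorm. apply sqrt_sqrt. apply inner_pos. Qed.
Lemma hnorm_zero {H : Hilbert} : hnorm (@hzero H) = 0.
Proof. unfold hnorm. rewrite Re_zero_l. apply sqrt_0. Qed.
Lemma hnorm_eq0 {H : Hilbert} (x : H) : hnorm x = 0 -> x = hzero.
Proof.
  intro E. apply inner_def. destruct (inner_pos _ x) as [Him _].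
  assert (Hr : Re (inner x x) = 0) by (rewrite <- hnorm_sq, E; ring).
  revert Him Hr. destruct (inner x x) as [r i]. simpl. intros; subst; reflexivity.
Qed.
Lemma Re_scal_norm {H : Hilbert} a (x : H) :
  Re (inner (hscal a x) (hscal a x)) = (Re a * Re a + Im a * Im a) * Re (inner x x).
Proof.
  rewrite inner_scal_l, (inner_sym _ (hscal a x) x), inner_scal_l.
  destruct (inner_pos _ x) as [Him _]. revert Him.
  destruct (inner x x) as [r i]; destruct a as [p q]; unfold Cmul, Cconj; simpl; intro; subst; ring.
Qed.
Lemma hnorm_scal {H : Hilbert} a (x : H) :
  hnorm (hscal a x) = sqrt (Re a * Re a + Im a * Im a) * hnorm x.
Proof. unfold hnorm. rewrite Re_scal_norm. apply sqrt_mult; [nra| apply inner_pos]. Qed.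
Lemma hnorm_opp {H : Hilbert} (x : H) : hnorm (hopp x) = hnorm x.
Proof. rewrite <- scal_m1, hnorm_scal. simpl. replace (-1 * -1 + 0 * 0) with 1 by ring.
  rewrite sqrt_1. ring. Qed.
Lemma hnorm_sub_sym {H : Hilbert} (a b : H) : hnorm (hsub a b) = hnorm (hsub b a).
Proof. replace (hsub b a) with (hopp (hsub a b)). symmetry; apply hnorm_opp.
  unfold hsub. rewrite oppD, oppK, hadd_comm. reflexivity. Qed.

Lemma CS {H : Hilbert} (x y : H) : Re (inner x y) <= hnorm x * hnorm y.
Proof.
  destruct (Req_dec (hnorm x) 0) as [Ha|Ha].
  { rewrite (hnorm_eq0 x Ha), Re_zero_l, hnorm_zero. lra. }
  destruct (Req_dec (hnorm y) 0) as [Hb|Hb].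
  { rewrite (hnorm_eq0 y Hb), Re_sym, Re_zero_l, hnorm_zero. lra. }
  assert (Pa := hnorm_pos x). assert (Pb := hnorm_pos y).
  assert (Z := proj2 (inner_pos _ (hadd (hscal (mkC (hnorm y) 0) x) (hscal (mkC (- hnorm x) 0) y)))).
  rewrite !Re_add_l, !Re_add_r, !Re_scal_l, !Re_scal_r, (Re_sym y x), <- !hnorm_sq in Z.
  assert (0 < hnorm x * hnorm y) by (apply Rmult_lt_0_compat; lra).
  nra.
Qed.

Lemma tri {H : Hilbert} (x y : H) : hnorm (hadd x y) <= hnorm x + hnorm y.
Proof.
  assert (E := hnorm_sq (hadd x y)).
  rewrite !Re_add_l, !Re_add_r, (Re_sym y x), <- !hnorm_sq in E.
  assert (C := CS x y). assert (P1 := hnorm_pos x). assert (P2 := hnorm_pos y).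
  assert (P3 := hnorm_pos (hadd x y)). nra.
Qed.

Lemma bound_pos {H K : Hilbert} (f : H -> R) (g : K -> R) (h : H -> K) M :
  (forall x, f x <= M * g (h x)) -> (forall y, 0 <= g y) -> forall x, f x <= Rmax M 0 * g (h x).
Proof. intros Hb Hg x. eapply Rle_trans; [apply Hb|]. apply Rmult_le_compat_r; [auto|apply Rmax_l]. Qed.

Lemma dom_opp {H K : Hilbert} (A : Op H K) : linear_op A -> forall x, dom A x -> dom A (hopp x).
Proof. intros (_&_&HS&_) x Hx. rewrite <- scal_m1. auto. Qed.

Lemma shift_sub {H : Hilbert} (B : Op H H) lam : linear_op B -> forall a b, dom B a -> dom B b ->
  shift_app B lam (hsub a b) = hsub (shift_app B lam a) (shift_app B lam b).
Proof.
  intros LB a b Ha Hb. pose proof LB as (D0&DA&DS&AA&AS). unfold shift_app.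
  rewrite (map_sub (dom B) (app B)); auto. rewrite scal_sub, sub_sub. reflexivity.
  apply dom_opp; auto.
Qed.

Lemma resolvent_transfer {H K : Hilbert} (A : Op H H) (B : Op K K) (T : H -> K) lam :
  linear_op A -> linear_op B -> intertwining A B T -> (forall x y, T x = T y -> x = y) ->
  inverse_everywhere_bounded T -> core (image_dom T A) B -> resolvent A lam -> resolvent B lam.
Proof.
  intros LA LB [[TA [TS [MT HMT]]] Tint] Tinj [Hsurj [Mi HMi]] [Hc1 Hc2] [Ra [[RA [RS [MR HMR]]] [HR1 HR2]]].
  pose (Tinv := fun y => proj1_sig (constructive_indefinite_description _ (Hsurj y))).
  assert (HTinv : forall y, T (Tinv y) = y) by (intro y; exact (proj2_sig (constructive_indefinite_description _ (Hsurj y)))).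
  clearbody Tinv.
  assert (TiA : forall a b, Tinv (hadd a b) = hadd (Tinv a) (Tinv b)).
  { intros a b; apply Tinj; rewrite TA, !HTinv; reflexivity. }
  assert (TiS : forall c a, Tinv (hscal c a) = hscal c (Tinv a)).
  { intros c a; apply Tinj; rewrite TS, !HTinv; reflexivity. }
  assert (Tsub : forall a b, T (hsub a b) = hsub (T a) (T b)).
  { intros a b. apply (map_sub (fun _ => True)); auto. }
  assert (Hshift : forall xi, dom A xi -> shift_app B lam (T xi) = T (shift_app A lam xi)).
  { intros xi Hxi. unfold shift_app. rewrite (proj2 (Tint xi Hxi)), Tsub, TS. reflexivity. }
  assert (HMT' := bound_pos _ _ (fun x => x) MT HMT hnorm_pos).
  assert (HMR' := bound_pos _ _ (fun x => x) MR HMR hnorm_pos).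
  assert (HMi' := bound_pos _ _ T Mi HMi hnorm_pos). simpl in *.
  set (mT := Rmax MT 0) in *. set (mR := Rmax MR 0) in *. set (mi := Rmax Mi 0) in *.
  assert (PmT : 0 <= mT) by apply Rmax_r.
  assert (PmR : 0 <= mR) by apply Rmax_r.
  assert (Pmi : 0 <= mi) by apply Rmax_r.
  set (C := mT * (mR * mi)).
  assert (PC : 0 <= C) by (unfold C; apply Rmult_le_pos; [|apply Rmult_le_pos]; auto).
  assert (est1 : forall xi, dom A xi -> hnorm (T xi) <= C * hnorm (shift_app B lam (T xi))).
  { intros xi Hxi. rewrite Hshift by auto. set (w := shift_app A lam xi).
    assert (E : xi = Ra w) by (symmetry; apply HR2; auto). rewrite E at 1.
    assert (h1 := HMT' (Ra w)). assert (h2 := HMR' w). assert (h3 := HMi' w).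
    assert (h4 := Rmult_le_compat_l mR _ _ PmR h3).
    assert (h5 := Rmult_le_compat_l mT _ _ PmT (Rle_trans _ _ _ h2 h4)).
    unfold C. rewrite <- !Rmult_assoc in *. lra. }
  set (l := sqrt (Re lam * Re lam + Im lam * Im lam)).
  assert (Pl : 0 <= l) by apply sqrt_pos.
  assert (est2 : forall z, dom B z -> hnorm z <= C * hnorm (shift_app B lam z)).
  { intros z Hz. destruct (Hc2 z Hz) as [u [Hu [cv1 cv2]]].
    apply Rle_plus_epsilon. intros eps Heps.
    set (d := eps / (1 + C + C * l)).
    assert (Pd : 0 < d) by (unfold d; apply Rdiv_lt_0_compat; nra).
    assert (Ed : d * (1 + C + C * l) = eps) by (unfold d; field; nra).
    destruct (cv1 d Pd) as [N1 HN1]. destruct (cv2 d Pd) as [N2 HN2].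
    set (n := max N1 N2).
    assert (e1 := HN1 n ltac:(apply Nat.le_max_l)).
    assert (e2 := HN2 n ltac:(apply Nat.le_max_r)). simpl in e2.
    destruct (Hu n) as [xi [Hxi Exi]].
    assert (Hun : dom B (u n)) by (apply Hc1; exists xi; auto).
    assert (i1 : hnorm z <= hnorm (hsub (u n) z) + hnorm (u n)).
    { rewrite (sub_add z (u n)) at 1. rewrite hnorm_sub_sym. apply tri. }
    assert (i2 : hnorm (u n) <= C * hnorm (shift_app B lam (u n))).
    { rewrite <- Exi. apply est1; auto. }
    assert (i3 : hnorm (shift_app B lam (u n)) <= hnorm (hsub (shift_app B lam (u n)) (shift_app B lam z)) + hnorm (shift_app B lam z)).
    { rewrite (sub_add (shift_app B lam (u n)) (shift_app B lam z)) at 1. apply tri. }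
    assert (i4 : hnorm (hsub (shift_app B lam (u n)) (shift_app B lam z)) <= hnorm (hsub (app B (u n)) (app B z)) + l * hnorm (hsub (u n) z)).
    { unfold shift_app. rewrite sub_sub, <- scal_sub. unfold hsub at 1.
      eapply Rle_trans; [apply tri|]. rewrite hnorm_opp, hnorm_scal. fold l. lra. }
    assert (i5 := Rmult_le_compat_l C _ _ PC (Rle_trans _ _ _ i3 (Rplus_le_compat_r _ _ _ i4))).
    assert (i6 : C * hnorm (hsub (app B (u n)) (app B z)) <= C * d) by (apply Rmult_le_compat_l; lra).
    assert (i7 : C * l * hnorm (hsub (u n) z) <= C * l * d) by (apply Rmult_le_compat_l; nra).
    nra. }
  exists (fun y => T (Ra (Tinv y))). split; [|split].
  - split; [|split].
    + intros a b. rewrite TiA, RA, TA. reflexivity.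
    + intros a b. rewrite TiS, RS, TS. reflexivity.
    + exists (mT * (mR * mi)). intro y.
      assert (h1 := HMT' (Ra (Tinv y))). assert (h2 := HMR' (Tinv y)). assert (h3 := HMi' (Tinv y)).
      rewrite HTinv in h3.
      assert (h4 := Rmult_le_compat_l mR _ _ PmR h3).
      assert (h5 := Rmult_le_compat_l mT _ _ PmT (Rle_trans _ _ _ h2 h4)). lra.
  - intro y. destruct (HR1 (Tinv y)) as [D1 E1]. split.
    + apply (Tint _ D1).
    + rewrite Hshift by auto. rewrite E1. apply HTinv.
  - intros x Hx. set (y1 := T (Ra (Tinv (shift_app B lam x)))).
    destruct (HR1 (Tinv (shift_app B lam x))) as [D1 E1].
    assert (Dy1 : dom B y1) by apply (Tint _ D1).
    assert (Sy1 : shift_app B lam y1 = shift_app B lam x).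
    { unfold y1. rewrite Hshift by auto. rewrite E1. apply HTinv. }
    apply sub_eq0. apply hnorm_eq0.
    pose proof LB as (D0&DA&DS&_&_).
    assert (Dd : dom B (hsub y1 x)) by (apply DA; auto; apply dom_opp; auto).
    assert (h := est2 _ Dd). rewrite shift_sub, Sy1 in h by auto.
    unfold hsub at 2 in h. rewrite hadd_opp, hnorm_zero in h.
    assert (h' := hnorm_pos (hsub y1 x)). nra.
Qed.

Theorem proposition3p14 (H K : Hilbert) (A : Op H H) (B : Op K K) (T : H -> K) :
  closed_densely_defined A -> closed_densely_defined B ->
  quasi_similar_via A B T ->
  inverse_everywhere_bounded T ->
  core (image_dom T A) B ->
  (forall lam, point_spectrum A lam -> point_spectrum B lam) /\
  (forall lam, point_spectrum B lam -> spectrum B lam) /\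
  (forall lam, spectrum B lam -> spectrum A lam).
Proof.
  intros [LA _] [LB _] [Hint [Tinj _]] Hinv Hcore. split; [|split].
  - intros lam [x [Dx [Nx Ex]]]. destruct Hint as [[TA [TS _]] Tint].
    destruct (Tint x Dx) as [D1 E1]. exists (T x). split; [auto|split].
    + intro Z. apply Nx. apply Tinj. rewrite Z. symmetry. apply map0. exact TA.
    + rewrite E1, Ex, TS. reflexivity.
  - intros lam [x [Dx [Nx Ex]]] [Rl [[RA _] [_ HR2]]]. apply Nx.
    rewrite <- (HR2 x Dx). unfold shift_app, hsub. rewrite Ex, hadd_opp. apply map0. exact RA.
  - intros lam HsB HrA. apply HsB. exact (resolvent_transfer A B T lam LA LB Hint Tinj Hinv Hcore HrA).
Qed.
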